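(* Let $l_1,l_2,l_3$ be affine functions on $\mathbb{F}_{p^r}$ with $l_1$ and $l_2$ permutations, write $l_2(x)=L_2(x)+c_2$ with $L_2$ additive, and let $d(x)$ be a Dembowski–Ostrom polynomial over $\mathbb{F}_{p^r}$. If $A(x)$ is an Alltop polynomial on $\mathbb{F}_{p^r}$ and $A'(x)=l_1(A(l_2(x)))+d(x)+l_3(x)$, then $A'(x)$ is an Alltop polynomial, and for every $a\in\mathbb{F}_{p^r}^*$ there exists $b\in\mathbb{F}_{p^r}^*$ (namely $b$ with $L_2(b)=a$) such that $\Delta_{A,a}(x)$ is EA-equivalent to $\Delta_{A',b}(x)$.
   Context: For $f:\mathbb{F}_{p^r}\to\mathbb{F}_{p^r}$ and $a\in\mathbb{F}_{p^r}$, $\Delta_{f,a}(x)=f(x+a)-f(x)$. A function $f$ is planar if for every $a\in\mathbb{F}_{p^r}^*$ the map $x\mapsto\Delta_{f,a}(x)$ is a bijection; $A$ is an Alltop polynomial if $\Delta_{A,a}$ is planar for every $a\in\mathbb{F}_{p^r}^*$. A function $L$ is additive if $L(x+y)=L(x)+L(y)$; an affine function is an additive function plus a constant. A Dembowski–Ostrom polynomial is one of the form $\sum_{i,j=0}^{r-1}a_{ij}x^{p^i+p^j}$, $a_{ij}\in\mathbb{F}_{p^r}$. Two functions $f_1,f_2$ are EA-equivalent if there exist affine $m_1,m_2,m_3$ with $m_1,m_2$ permutations such that $f_1=m_1\circ f_2\circ m_2+m_3$. *)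

(* Defs.v *)
(* The field F_{p^r} is an abstract finite field F of
   characteristic p with #|F| = p^r. *)
From mathcomp Require Import all_boot all_order all_algebra.
Set Implicit Arguments. Unset Strict Implicit. Unset Printing Implicit Defensive.
Import GRing.Theory.
Local Open Scope ring_scope.

Section Defs.
Variable F : finFieldType.

Definition Delta (f : F -> F) (a : F) : F -> F := fun x => f (x + a) - f x.

Definition planar (f : F -> F) : Prop :=
  forall a : F, a != 0 -> bijective (Delta f a).

Definition alltop (A : F -> F) : Prop :=
  forall a : F, a != 0 -> planar (Delta A a).

Definition additive_fun (L : F -> F) : Prop :=
  forall x y : F, L (x + y) = L x + L y.

Definition affine_fun (m : F -> F) : Prop :=
  exists L : F -> F, exists c : F, additive_fun L /\ forall x, m x = L x + c.

Definition DO_poly (p r : nat) (d : F -> F) : Prop :=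
  exists a : 'I_r -> 'I_r -> F,
    forall x : F, d x = \sum_(i < r) \sum_(j < r) a i j * x ^+ (p ^ i + p ^ j)%N.

Definition EA_equiv (f1 f2 : F -> F) : Prop :=
  exists m1 m2 m3 : F -> F,
    [/\ affine_fun m1, affine_fun m2, affine_fun m3,
        bijective m1 /\ bijective m2 &
        forall x, f1 x = m1 (f2 (m2 x)) + m3 x].
End Defs.

(* Main.v *)
Require Import Defs.
From mathcomp Require Import all_boot all_order all_algebra.
From mathcomp Require Import ring.
Import GRing.Theory.
Local Open Scope ring_scope.
Set Implicit Arguments. Unset Strict Implicit.

Section Aux.
Variable F : finFieldType.

Lemma add0f (L : F -> F) : additive_fun L -> L 0 = 0.
Proof. move=> h; apply: (@addrI _ (L 0)); by rewrite -h !addr0. Qed.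

Lemma addNf (L : F -> F) x : additive_fun L -> L (- x) = - L x.
Proof. move=> h; apply/eqP; rewrite -addr_eq0 -h addNr add0f //. Qed.

Lemma addBf (L : F -> F) x y : additive_fun L -> L (x - y) = L x - L y.
Proof. by move=> h; rewrite h addNf. Qed.

Lemma aff_bij (l L : F -> F) c : bijective l -> (forall x, l x = L x + c) ->
  bijective L.
Proof.
move=> hb he; have : bijective ((fun y => y - c) \o l).
  apply: bij_comp => //; exists (fun y => y + c) => y; by rewrite ?subrK ?addrK.
by move/eq_bij; apply => x /=; rewrite he addrK.
Qed.

Lemma inv_add (L Li : F -> F) : additive_fun L -> cancel L Li -> cancel Li L ->
  additive_fun Li.
Proof.
move=> h c1 c2 x y; apply: (can_inj c1); by rewrite h !c2.
Qed.

Lemma add_comp (L M : F -> F) : additive_fun L -> additive_fun M ->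
  additive_fun (L \o M).
Proof. by move=> h1 h2 x y /=; rewrite h2 h1. Qed.

Lemma deltaComp (f G L1 L2 : F -> F) (l2 : F -> F) c2 c x :
  additive_fun L1 -> additive_fun L2 -> (forall x, l2 x = L2 x + c2) ->
  Delta (fun x => L1 (f (l2 x)) + G x) c x =
  L1 (Delta f (L2 c) (l2 x)) + Delta G c x.
Proof.
move=> h1 h2 he; rewrite /Delta !he h2 (addBf _ _ h1).
have -> : L2 x + L2 c + c2 = L2 x + c2 + L2 c by ring.
ring.
Qed.

Lemma DO_delta p r (d : F -> F) : prime p -> p \in [pchar F] -> DO_poly p r d ->
  forall b, exists M e, additive_fun M /\ forall x, Delta d b x = M x + e.
Proof.
move=> hp hc [a ha] b.
have fr : forall i (x y : F), (x + y) ^+ (p ^ i) = x ^+ (p ^ i) + y ^+ (p ^ i).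
  move=> i x y; apply: exprDn_pchar; by rewrite pnatX (pnatE _ hp) hc.
exists (fun x => \sum_(i < r) \sum_(j < r)
   a i j * (x ^+ (p ^ i) * b ^+ (p ^ j) + b ^+ (p ^ i) * x ^+ (p ^ j))).
exists (d b); split.
  move=> x y; rewrite -big_split /=; apply: eq_bigr => i _.
  rewrite -big_split /=; apply: eq_bigr => j _; rewrite !fr; ring.
move=> x; rewrite /Delta !ha -sumrB -big_split /=; apply: eq_bigr => i _.
rewrite -sumrB -big_split /=; apply: eq_bigr => j _.
rewrite !exprD !fr; ring.
Qed.

End Aux.

Theorem lemma5 (F : finFieldType) (p r : nat)
  (hp : prime p) (hchar : p \in [pchar F]) (hcard : #|F| = (p ^ r)%N)
  (l1 l2 l3 L2 : F -> F) (c2 : F) (d A : F -> F)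
  (hl1 : affine_fun l1) (hl2 : affine_fun l2) (hl3 : affine_fun l3)
  (hl1b : bijective l1) (hl2b : bijective l2)
  (hL2 : additive_fun L2) (hl2e : forall x, l2 x = L2 x + c2)
  (hd : DO_poly p r d) (hA : alltop A) :
  let A' := fun x => l1 (A (l2 x)) + d x + l3 x in
  alltop A' /\
  forall a : F, a != 0 ->
    exists b : F, [/\ b != 0, L2 b = a & EA_equiv (Delta A a) (Delta A' b)].
Proof.
move=> A'.
case: hl1 => L1 [c1 [hL1 hl1e]]; case: hl3 => L3 [c3 [hL3 hl3e]].
have bL1 := aff_bij hl1b hl1e; have bL2 := aff_bij hl2b hl2e.
case: (bL1) => L1i cL1a cL1b; case: (bL2) => L2i cL2a cL2b.
have hL1i := inv_add hL1 cL1a cL1b; have hL2i := inv_add hL2 cL2a cL2b.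
pose G x := c1 + d x + l3 x.
have DG : forall b, exists Mb eb, additive_fun Mb /\ forall x, Delta G b x = Mb x + eb.
  move=> b; have [M [e [hM hMe]]] := DO_delta hp hchar hd b.
  exists M, (e + L3 b); split => // x.
  rewrite addrA -hMe /Delta /G !hl3e hL3; ring.
have dext : forall (f g : F -> F) a, f =1 g -> Delta f a =1 Delta g a.
  by move=> f g a e x; rewrite /Delta !e.
have eqA : forall b x, Delta A' b x = L1 (Delta A (L2 b) (l2 x)) + Delta G b x.
  move=> b x; rewrite -(deltaComp _ _ _ _ hL1 hL2 hl2e); apply: (dext _ _ _ _ x) => y.
  by rewrite /A' /G hl1e; ring.
have L2nz : forall b, b != 0 -> L2 b != 0.
  by move=> b; apply: contra => /eqP h; apply/eqP; rewrite -(cL2a b) h (add0f hL2i).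
have bT : forall k, bijective (fun y => L1 y + k).
  move=> k; have : bijective ((fun y => y + k) \o L1).
    apply: bij_comp => //; exists (fun y => y - k) => y; by rewrite ?subrK ?addrK.
  by move/eq_bij; apply.
split.
  move=> b bnz c cnz.
  have [Mb [eb [hMb hMbe]]] := DG b.
  have e1 : Delta (Delta A' b) c =1
     (fun y => L1 y + Mb c) \o (Delta (Delta A (L2 b)) (L2 c)) \o l2.
    move=> x; rewrite (dext _ _ _ (eqA b)) (deltaComp _ _ _ _ hL1 hL2 hl2e) /=.
    by congr (_ + _); rewrite [LHS]/Delta !hMbe hMb; ring.
  apply: (eq_bij _ (fsym e1)); apply: bij_comp => //; apply: bij_comp => //.
  by apply: (hA _ (L2nz _ bnz)); apply: L2nz.
move=> a anz; exists (L2i a).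
have bnz : L2i a != 0.
  by apply: contra anz => /eqP h; apply/eqP; rewrite -(cL2b a) h (add0f hL2).
split => //.
have [Mb [eb [hMb hMbe]]] := DG (L2i a).
pose m2 := fun y => L2i (y - c2).
have l2m2 : forall y, l2 (m2 y) = y by move=> y; rewrite hl2e /m2 cL2b subrK.
exists L1i, m2, (fun x => - L1i (Mb (m2 x) + eb)); split.
- exists L1i, 0; split => // x; by rewrite addr0.
- exists L2i, (- L2i c2); split => // x; by rewrite /m2 (addBf _ _ hL2i).
- exists (fun x => - L1i (Mb (L2i x))), (- L1i (Mb (- L2i c2) + eb)); split.
    by move=> x y; rewrite hL2i hMb hL1i opprD.
  move=> x; rewrite /m2 (addBf _ _ hL2i) hMb !hL1i; ring.
- split; first by exists L1. by exists l2 => y; [exact: l2m2 | rewrite /m2 hl2e addrK cL2a].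
- move=> x; rewrite eqA l2m2 cL2b hL1i cL1a hMbe; ring.
Qed.
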